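(* Let $F:\mathbb{R}^n\to\mathbb{R}^n$ and $\phi:\mathbb{R}^n\to\mathbb{R}$ be smooth, let $p\ge1$, $d>0$, and $\Omega_d=\{x\in\mathbb{R}^n:|x|<d\}$. Let $\delta_0,\delta_1,\dots,\delta_p\ge0$ satisfy $$\mathcal{L}_F^p\phi(z)\le\sum_{i=0}^{p-1}\delta_i\mathcal{L}_F^i\phi(z)+\delta_p\quad\text{for all }z\in\Omega_d.$$ For $\xi_0\in\Omega_d$ let $\xi(t;\xi_0)$ denote the solution of $\dot\xi=F(\xi)$ with $\xi(0)=\xi_0$, and let $\tau_{\xi_0}=\sup\{\tau>0:\xi(t;\xi_0)\in\Omega_d\ \forall t\in[0,\tau)\}$. Let $A$ be the $(p+1)\times(p+1)$ matrix whose rows $1,\dots,p-1$ are $e_2^\top,\dots,e_p^\top$ (i.e. $A_{k,k+1}=1$ for $k=1,\dots,p-1$, other entries of these rows zero), whose $p$-th row is $(\delta_0,\delta_1,\dots,\delta_{p-1},1)$, and whose last row is zero. Let $\psi(y,t)=e^{At}y$ be the solution of $\dot\psi=A\psi$ with initial condition $y$, and $\psi_1(y,t)$ its first component. Define $y(\xi_0)=\big(\phi(\xi_0),\mathcal{L}_F\phi(\xi_0),\dots,\mathcal{L}_F^{p-1}\phi(\xi_0),\delta_p\big)^\top$. Then for all $\xi_0\in\Omega_d$, $$\phi(\xi(t;\xi_0))\le\psi_1(y(\xi_0),t)\quad\text{for all }t\in[0,\tau_{\xi_0}).$$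
   Context: $\mathcal{L}_F\phi$ denotes the Lie derivative of $\phi$ along $F$, $\mathcal{L}_F^k\phi=\mathcal{L}_F(\mathcal{L}_F^{k-1}\phi)$, $\mathcal{L}_F^0\phi=\phi$. $|\cdot|$ is the Euclidean norm. *)

(* Defs.v *)
From HB Require Import structures.
From mathcomp Require Import all_boot all_order all_algebra.
From mathcomp Require Import all_classical all_reals all_analysis.
Set Implicit Arguments. Unset Strict Implicit. Unset Printing Implicit Defensive.
Import Order.TTheory GRing.Theory Num.Theory.
Import numFieldNormedType.Exports.
Local Open Scope ring_scope.

Fixpoint Ck {R : realType} {V W : normedModType R} (k : nat) (f : V -> W) : Prop :=
  match k with
  | 0%N => continuous f
  | k'.+1 => (forall x, differentiable f x) /\
             (forall v : V, Ck k' (fun x => 'd f x v))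
  end.

Definition smooth {R : realType} {V W : normedModType R} (f : V -> W) : Prop :=
  forall k, Ck k f.

Definition enorm {R : realType} {n : nat} (x : 'rV[R]_n) : R :=
  Num.sqrt (\sum_(i < n) x ord0 i ^+ 2).

Definition Omega {R : realType} (n : nat) (d : R) : set 'rV[R]_n :=
  [set x | enorm x < d].
Arguments Omega {R} n d.

Definition Lie {R : realType} {n : nat} (F : 'rV[R]_n -> 'rV[R]_n)
  (phi : 'rV[R]_n -> R) : 'rV[R]_n -> R :=
  fun x => 'd phi x (F x).

Fixpoint Lie_iter {R : realType} {n : nat} (F : 'rV[R]_n -> 'rV[R]_n)
  (phi : 'rV[R]_n -> R) (k : nat) : 'rV[R]_n -> R :=
  match k with
  | 0%N => phi
  | k'.+1 => Lie F (Lie_iter F phi k')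
  end.

(* The (p+1)x(p+1) matrix A (0-based indices): A k (k+1) = 1 for k < p-1,
   row p-1 = (delta_0, ..., delta_{p-1}, 1), row p = 0. *)
Definition Amx {R : realType} (p : nat) (delta : nat -> R) : 'M[R]_(p.+1) :=
  \matrix_(i, j)
    if (i.+1 < p)%N then (if j == i.+1 :> nat then 1 else 0)
    else if i == p.-1 :> nat then
      (if (j < p)%N then delta j else 1)
    else 0.

Definition yvec {R : realType} {n : nat} (p : nat) (delta : nat -> R)
  (F : 'rV[R]_n -> 'rV[R]_n) (phi : 'rV[R]_n -> R) (x0 : 'rV[R]_n)
  : 'cV[R]_(p.+1) :=
  \col_(i < p.+1) (if (i < p)%N then Lie_iter F phi i x0 else delta p).

(* Main.v *)
Require Import Defs.
From HB Require Import structures.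
From mathcomp Require Import all_boot all_order all_algebra.
From mathcomp Require Import all_classical all_reals all_analysis.
From mathcomp Require Import ring lra zify.
Import Order.TTheory GRing.Theory Num.Theory.
Import numFieldNormedType.Exports.
Local Open Scope ring_scope.
Local Open Scope classical_set_scope.

Section CkTheory.
Context {R : realType}.

Lemma Ck_pred (V W : normedModType R) k (f : V -> W) : Ck k.+1 f -> Ck k f.
Proof.
elim: k f => [|k IH] f /=.
  by move=> [df _] x; apply: differentiable_continuous.
move=> [df Hv]; split => // v; exact: IH.
Qed.

Lemma Ck_diff (V W : normedModType R) k (f : V -> W) x : Ck k.+1 f -> differentiable f x.
Proof. by move=> [df _]. Qed.

Lemma Ck_cst (V W : normedModType R) k (a : W) : Ck k (fun _ : V => a).
Proof.
elim: k a => [|k IH] a /=; first by move=> x; exact: cvg_cst.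
split => [x|v]; first exact: differentiable_cst.
have -> : (fun x => 'd (fun _ : V => a) x v) = (fun _ => 0).
  by apply: funext => x; rewrite (diff_cst a x).
exact: IH.
Qed.

Lemma CkD (V W : normedModType R) k (f g : V -> W) : Ck k f -> Ck k g -> Ck k (f + g).
Proof.
elim: k f g => [|k IH] f g /=.
  by move=> cf cg x; apply: continuousD; [exact: cf|exact: cg].
move=> [df Hf] [dg Hg]; split => [x|v]; first exact: differentiableD.
have -> : (fun x => 'd (f + g) x v) = (fun x => 'd f x v) + (fun x => 'd g x v).
  by apply: funext => x; rewrite (diffD (df x) (dg x)).
exact: IH.
Qed.

Lemma Ck_sum (V W : normedModType R) k m (f : 'I_m -> V -> W) :
  (forall i, Ck k (f i)) -> Ck k (\sum_(i < m) f i).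
Proof.
move=> H; elim/big_ind: _ => //; first exact: Ck_cst.
by move=> ? ? ? ?; apply: CkD.
Qed.

Lemma CkM (V : normedModType R) k (f g : V -> R) : Ck k f -> Ck k g -> Ck k (f * g).
Proof.
elim: k f g => [|k IH] f g /=.
  by move=> cf cg x; apply: continuousM; [exact: cf|exact: cg].
move=> Cf Cg; have [df Hf] := Cf; have [dg Hg] := Cg.
split => [x|v]; first exact: differentiableM.
have -> : (fun x => 'd (f * g) x v) =
   (f * (fun x => 'd g x v)) + (g * (fun x => 'd f x v)).
  by apply: funext => x; rewrite (diffM (df x) (dg x)).
apply: CkD; apply: IH => //; exact: Ck_pred.
Qed.

Lemma Ck_coord (V : normedModType R) k m n (F : V -> 'M[R]_(m, n)) i j :
  Ck k F -> Ck k (fun x => F x i j).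
Proof.
elim: k F => [|k IH] F /=.
  move=> cF x; apply: (@continuous_comp _ _ _ F (fun N : 'M[R]_(m, n) => N i j)).
    exact: cF.
  exact: coord_continuous.
move=> [dF HF]; split => [x|v].
  apply: (@differentiable_comp _ _ _ _ F (fun N : 'M[R]_(m, n) => N i j)) => //.
  exact: differentiable_coord.
have @f : {linear 'M[R]_(m, n) -> R}.
  by exists (fun N : 'M[R]_(_, _) => N i j); do 2![eexists]; do ?[constructor];
     rewrite ?mxE// => ? *; rewrite ?mxE//; move=> ?; rewrite !mxE.
have fE : (fun N : 'M[R]_(m, n) => N i j) = f by [].
have -> : (fun x => 'd (fun x0 => F x0 i j) x v) = (fun x => 'd F x v i j).
  apply: funext => x.
  have -> : (fun x0 => F x0 i j) = f \o F by [].
  rewrite diff_comp //; last by rewrite -fE; exact: differentiable_coord.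
  rewrite /= (diff_lin (F x) (f:=f)) //; rewrite -fE; exact: coord_continuous.
exact: IH.
Qed.


Lemma lin_row_expand n (f : {linear 'rV[R]_n -> R}) (v : 'rV[R]_n) :
  f v = \sum_(j < n) v ord0 j * f (delta_mx ord0 j).
Proof.
rewrite {1}(row_sum_delta v) linear_sum; apply: eq_bigr => j _.
by rewrite linearZ.
Qed.

Lemma Ck_Lie n k (F : 'rV[R]_n -> 'rV[R]_n) (g : 'rV[R]_n -> R) :
  Ck k.+1 g -> Ck k F -> Ck k (Lie F g).
Proof.
move=> Cg CF.
have -> : Lie F g = \sum_(j < n) ((fun x => F x ord0 j) * (fun x => 'd g x (delta_mx ord0 j))).
  apply: funext => x; rewrite /Lie fct_sumE.
  exact: lin_row_expand.
apply: Ck_sum => j; apply: CkM; first exact: Ck_coord.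
by case: Cg => _ H; exact: H.
Qed.

Lemma smooth_Lie_iter n (F : 'rV[R]_n -> 'rV[R]_n) (phi : 'rV[R]_n -> R) i :
  smooth F -> smooth phi -> smooth (Lie_iter F phi i).
Proof.
move=> sF sphi; elim: i => [|i IH] //= k.
exact: Ck_Lie.
Qed.

End CkTheory.

Section An.
Context {R : realType}.

Lemma is_derive_comp_diff (V W : normedModType R) (xi : R -> V) (g : V -> W) (s : R) (v : V) :
  is_derive s (1:R) xi v -> differentiable g (xi s) ->
  is_derive s (1:R) (g \o xi) ('d g (xi s) v).
Proof.
move=> [dxi Dxi] dg.
have dxi' : differentiable xi s by apply/derivable1_diffP.
have dc : differentiable (g \o xi) s := differentiable_comp dxi' dg.
apply: DeriveDef; first by apply/derivable1_diffP.
rewrite deriveE // diff_comp // /=; congr ('d g (xi s) _).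
by rewrite -Dxi deriveE.
Qed.

Lemma quad_is_derive (f : R -> R) x c :
  (forall e, `|f (e + x) - f x - c * e| <= e ^+ 2) -> is_derive x 1 f c.
Proof.
move=> H.
have L : (fun h : R => h^-1 *: ((f \o shift x) (h *: 1) - f x)) @ 0^' --> c.
  apply/cvgrPdist_lt => eps eps0; near=> e.
  have e0 : e != 0 by near: e; exact: nbhs_dnbhs_neq.
  have ee : `|e| < eps by near: e; exact: dnbhs0_lt.
  rewrite /= /shift /= [e%:A]mulr1 [_ *: _]/GRing.scale /=.
  have -> : c - e^-1 * (f (e + x) - f x) = - (e^-1 * (f (e + x) - f x - c * e)).
    by field.
  rewrite normrN normrM normfV.
  apply: le_lt_trans ee.
  rewrite ler_pdivrMl ?normr_gt0 // -normrM -expr2 (ger0_norm (sqr_ge0 e)).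
  exact: H.
apply: DeriveDef; first by apply/cvg_ex; exists c; exact: L.
exact: cvg_lim L.
Unshelve. all: by end_near.
Qed.


Definition mneg (x : R) : R := if x < 0 then x else 0.
Definition hq (x : R) : R := mneg x ^+ 2.

Lemma mneg_le0 x : mneg x <= 0.
Proof. by rewrite /mneg; case: ifP => // /ltW. Qed.

Lemma mneg_le x : mneg x <= x.
Proof. by rewrite /mneg; case: ifP => // /negbT; rewrite -leNgt. Qed.

Lemma hq_ge0 x : 0 <= hq x.
Proof. exact: sqr_ge0. Qed.

Lemma hq_eq0 x : hq x = 0 -> 0 <= x.
Proof.
rewrite /hq /mneg; case: ifP => [x0 /eqP|/negbT]; last by rewrite -leNgt.
by rewrite sqrf_eq0 => /eqP x00; move: x0; rewrite x00 ltxx.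
Qed.

Lemma hq_is_derive x : is_derive x (1:R) hq (2 * mneg x).
Proof.
apply: quad_is_derive => e; rewrite /hq /mneg ler_norml.
case: ifP => h1; case: ifP => h2; apply/andP; split; nra.
Qed.

Lemma is_derive_hq_comp (w : R -> R) s dw :
  is_derive s (1:R) w dw -> is_derive s (1:R) (hq \o w) (2 * mneg (w s) * dw).
Proof.
move=> Hw.
have dh : differentiable hq (w s).
  by apply/derivable1_diffP; case: (hq_is_derive (w s)).
have := @is_derive_comp_diff _ _ w hq s dw Hw dh.
rewrite diff1E // derive1E (@derive_val _ _ _ _ _ _ _ (hq_is_derive (w s))).
by rewrite [dw *: _]/GRing.scale /= mulrC.
Qed.


Lemma is_derive_comp1 (w g : R -> R) s dw dg :
  is_derive s (1:R) w dw -> is_derive (w s) (1:R) g dg ->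
  is_derive s (1:R) (g \o w) (dg * dw).
Proof.
move=> Hw Hg.
have dh : differentiable g (w s) by apply/derivable1_diffP; case: Hg.
have := @is_derive_comp_diff _ _ w g s dw Hw dh.
rewrite diff1E // derive1E (@derive_val _ _ _ _ _ _ _ Hg).
by rewrite [dw *: _]/GRing.scale /= mulrC.
Qed.

Lemma sum_single (f : nat -> R) p a : (a < p)%N -> (forall i, 0 <= f i) ->
  f a <= \sum_(i < p) f i.
Proof.
move=> ap f0; rewrite (bigD1 (Ordinal ap)) //= lerDl.
by apply: sumr_ge0 => i _.
Qed.

Lemma nincr_cc (f df : R -> R) (a b : R) : a <= b ->
  (forall x, a <= x <= b -> is_derive x (1:R) f (df x)) ->
  (forall x, a <= x <= b -> df x <= 0) -> f b <= f a.
Proof.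
move=> ab Hd Hle.
apply: (@ler0_derive1_nincr _ f a b) => //.
- move=> x; rewrite in_itv /= => /andP[h1 h2].
  by case: (Hd x _); rewrite ?(ltW h1) ?(ltW h2).
- move=> x; rewrite in_itv /= => /andP[h1 h2].
  have hx : a <= x <= b by rewrite ?(ltW h1) ?(ltW h2).
  by rewrite derive1E (@derive_val _ _ _ _ _ _ _ (Hd x hx)); exact: Hle.
- apply: derivable_within_continuous => x; rewrite in_itv /= => hx.
  by case: (Hd x hx).
Qed.

Lemma ndecr_cc (f df : R -> R) (a b : R) : a <= b ->
  (forall x, a <= x <= b -> is_derive x (1:R) f (df x)) ->
  (forall x, a <= x <= b -> 0 <= df x) -> f a <= f b.
Proof.
move=> ab Hd Hle.
apply: (@ger0_derive1_ndecr _ f a b) => //.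
- move=> x; rewrite in_itv /= => /andP[h1 h2].
  by case: (Hd x _); rewrite ?(ltW h1) ?(ltW h2).
- move=> x; rewrite in_itv /= => /andP[h1 h2].
  have hx : a <= x <= b by rewrite ?(ltW h1) ?(ltW h2).
  by rewrite derive1E (@derive_val _ _ _ _ _ _ _ (Hd x hx)); exact: Hle.
- apply: derivable_within_continuous => x; rewrite in_itv /= => hx.
  by case: (Hd x hx).
Qed.

End An.

Theorem lemma2 (R : realType) (n p : nat) (F : 'rV[R]_n -> 'rV[R]_n)
  (phi : 'rV[R]_n -> R) (d : R) (delta : nat -> R) :
  smooth F -> smooth phi -> (1 <= p)%N -> 0 < d ->
  (forall i, (i <= p)%N -> 0 <= delta i) ->
  (forall z, Omega n d z ->
     Lie_iter F phi p z <= \sum_(i < p) delta i * Lie_iter F phi i z + delta p) ->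
  forall (xi0 : 'rV[R]_n), Omega n d xi0 ->
  forall (xi : R -> 'rV[R]_n) (t : R), 0 <= t ->
  xi 0 = xi0 ->
  (forall s : R, 0 <= s <= t -> is_derive s (1 : R) xi (F (xi s)) /\ Omega n d (xi s)) ->
  forall psi : R -> 'cV[R]_(p.+1),
  psi 0 = yvec p delta F phi xi0 ->
  (forall s : R, is_derive s (1 : R) psi (Amx p delta *m psi s)) ->
  phi (xi t) <= psi t ord0 ord0.
Proof.
move=> sF sphi p1 d0 dge0 Hlie xi0 Oxi0 xi t t0 xi00 Hxi psi psi0 Hpsi.
set L := fun i => Lie_iter F phi i.
have DL : forall i s, 0 <= s <= t ->
    is_derive s (1:R) (fun r => L i (xi r)) (L i.+1 (xi s)).
  move=> i s hs.
  have dL : differentiable (L i) (xi s).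
    exact: (@Ck_diff _ _ _ 0 _ _ (@smooth_Lie_iter _ n F phi i sF sphi 1)).
  exact: (@is_derive_comp_diff _ _ _ xi (L i) s _ (Hxi s hs).1 dL).
set u := fun (i : nat) (s : R) => psi s (inord i) ord0.
set A := Amx p delta.
have Du : forall i s, is_derive s (1:R) (u i) ((A *m psi s) (inord i) ord0).
  move=> i s; case: (Hpsi s) => dpsi Dpsi.
  apply: DeriveDef; first exact: (derivable_mxP _ _ _).1 dpsi (inord i) ord0.
  by rewrite -Dpsi (derive_mx dpsi) mxE.
have A1 : forall a s, (a.+1 < p)%N -> (A *m psi s) (inord a) ord0 = u a.+1 s.
  move=> a s ha.
  have ha1 : (a < p.+1)%N by lia.
  have ha2 : (a.+1 < p.+1)%N by lia.
  rewrite mxE (bigD1 (inord a.+1)) //= big1 ?addr0.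
    by rewrite /A mxE !inordK // ha eqxx mul1r.
  move=> k hk; rewrite /A mxE inordK // ha.
  case: eqP => [hk'|]; last by rewrite mul0r.
  by move: hk; rewrite -hk' inord_val eqxx.
have A2 : forall s, (A *m psi s) (inord p.-1) ord0 = \sum_(j < p) delta j * u j s + u p s.
  move=> s; rewrite mxE big_ord_recr /=; congr (_ + _).
    apply: eq_bigr => j _; rewrite /A mxE inordK; last by lia.
    have -> : ((p.-1).+1 < p)%N = false by lia.
    rewrite eqxx /= ltn_ord /u; congr (_ * psi s _ _).
    apply: val_inj; rewrite /= inordK //; exact: ltnW (ltn_ord j).
  rewrite /A mxE inordK; last by lia.
  have -> : ((p.-1).+1 < p)%N = false by lia.
  rewrite eqxx /= ltnn mul1r /u; congr (psi s _ _).
  by apply: val_inj; rewrite /= inordK.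
have A3 : forall s, (A *m psi s) (inord p) ord0 = 0.
  move=> s; rewrite mxE big1 // => k _.
  rewrite /A mxE inordK // ltnNge leqnSn /=.
  have -> : (p == p.-1) = false by apply/eqP; lia.
  by rewrite mul0r.
have up : forall s, 0 <= s -> u p s = delta p.
  move=> s s0.
  have e0 : u p 0 = delta p by rewrite /u psi0 /yvec mxE inordK // ltnn.
  have Dp : forall x, is_derive x (1:R) (u p) 0 by move=> x; rewrite -(A3 x); exact: Du.
  rewrite -e0; apply/eqP; rewrite eq_le.
  rewrite (@nincr_cc _ (u p) (fun _ => 0) 0 s s0 (fun x _ => Dp x) (fun _ _ => lexx 0)).
  by rewrite (@ndecr_cc _ (u p) (fun _ => 0) 0 s s0 (fun x _ => Dp x) (fun _ _ => lexx 0)).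
set w := fun (i : nat) (r : R) => u i r - L i (xi r).
set dw := fun (i : nat) (r : R) => (A *m psi r) (inord i) ord0 - L i.+1 (xi r).
have Dw : forall i r, 0 <= r <= t -> is_derive r (1:R) (w i) (dw i r).
  move=> i r hr.
  exact: (@is_deriveB _ _ _ (u i) (fun r => L i (xi r)) r 1 _ _ (Du i r) (DL i r hr)).
set Wf := \sum_(i < p) (fun r => hq (w i r)).
have WE : forall r, Wf r = \sum_(i < p) hq (w i r) by move=> r; rewrite /Wf fct_sumE.
set dWf := fun r => \sum_(i < p) 2 * mneg (w i r) * dw i r.
have DW : forall r, 0 <= r <= t -> is_derive r (1:R) Wf (dWf r).
  move=> r hr; rewrite /Wf /dWf.
  apply: is_derive_sum => i.
  exact: (@is_derive_hq_comp _ (w i) r (dw i r) (Dw i r hr)).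
set S := \sum_(j < p) delta j.
have S0 : 0 <= S by apply: sumr_ge0 => j _; apply: dge0; exact: ltnW.
set K := p%:R * (2 * (1 + S)).
have Bound : forall r, 0 <= r <= t -> dWf r <= K * Wf r.
  move=> r hr; have /andP[r0 rt] := hr.
  have Wge : forall a, (a < p)%N -> hq (w a r) <= Wf r.
    move=> a ha; rewrite WE.
    exact: (@sum_single _ (fun i => hq (w i r)) p a ha (fun i => hq_ge0 _)).
  have W0 : 0 <= Wf r by rewrite WE; apply: sumr_ge0 => i _; exact: hq_ge0.
  have mm : forall a b, (a < p)%N -> (b < p)%N ->
      2 * mneg (w a r) * mneg (w b r) <= 2 * Wf r.
    move=> a b ha hb; have := Wge a ha; have := Wge b hb; rewrite /hq => h1 h2.
    nra.
  have T : forall i : 'I_p, 2 * mneg (w i r) * dw i r <= 2 * (1 + S) * Wf r.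
    move=> i; case: (ltnP i.+1 p) => hi.
      have -> : dw i r = w i.+1 r by rewrite /dw A1.
      have := mm i i.+1 (ltn_ord i) hi.
      have := mneg_le0 (w i r); have := mneg_le (w i.+1 r); nra.
    have ei : (i : nat) = p.-1 by have := ltn_ord i; lia.
    have Hd : \sum_(j < p) delta j * w j r <= dw i r.
      rewrite /dw ei A2 (up r r0) (prednK p1).
      have := Hlie (xi r) (Hxi r hr).2; rewrite -/(L p) => hl.
      have -> : \sum_(j < p) delta j * w j r =
          \sum_(j < p) delta j * u j r - \sum_(j < p) delta j * L j (xi r).
        by rewrite -sumrB; apply: eq_bigr => j _; rewrite /w mulrBr.
      rewrite /L in hl *; lra.
    have mi0 := mneg_le0 (w i r).
    apply: (@le_trans _ _ (2 * mneg (w i r) * \sum_(j < p) delta j * w j r)).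
      by nra.
    rewrite mulr_sumr.
    apply: (@le_trans _ _ (\sum_(j < p) delta j * (2 * Wf r))).
      apply: ler_sum => j _.
      have dj := dge0 j (ltnW (ltn_ord j)).
      have h1 : mneg (w i r) * delta j <= 0 by nra.
      have := mneg_le (w j r); have := mm i j (ltn_ord i) (ltn_ord j).
      nra.
    rewrite -mulr_suml -/S; nra.
  rewrite /dWf.
  apply: (@le_trans _ _ (\sum_(i < p) 2 * (1 + S) * Wf r)).
    by apply: ler_sum => i _; exact: T.
  by rewrite sumr_const card_ord -[X in X <= _]mulr_natl /K !mulrA.
have Dlin : forall r, is_derive r (1:R) (fun r => - K * r) (- K).
  move=> r; apply: (@quad_is_derive _ (fun r => - K * r) r (- K)) => e.
  have -> : - K * (e + r) - - K * r - - K * e = 0 by ring.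
  by rewrite normr0 sqr_ge0.
have Dexp : forall r, is_derive r (1:R) (fun r => expR (- K * r)) (expR (- K * r) * - K).
  move=> r.
  exact: (@is_derive_comp1 _ (fun r => - K * r) expR r (- K) (expR (- K * r))
            (Dlin r) (is_derive_expR _)).
set Zf := fun r => expR (- K * r) * Wf r.
have DZ : forall r, 0 <= r <= t ->
    is_derive r (1:R) Zf (expR (- K * r) * (dWf r - K * Wf r)).
  move=> r hr.
  have H := is_deriveM (Dexp r) (DW r hr).
  have E : Zf = ((fun r => expR (- K * r)) * Wf) by apply: funext.
  rewrite E; case: H => H1 H2; apply: DeriveDef => //.
  by rewrite H2 /GRing.scale /=; ring.
have Zle : Zf t <= Zf 0.
  apply: (@nincr_cc _ Zf (fun r => expR (- K * r) * (dWf r - K * Wf r)) 0 t t0 DZ).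
  move=> x hx; apply: mulr_ge0_le0; first exact: expR_ge0.
  by rewrite subr_le0; exact: Bound.
have W00 : Wf 0 = 0.
  rewrite WE big1 // => i _.
  have -> : w i 0 = 0.
    rewrite /w /u psi0 /yvec mxE inordK; last exact: ltnW (ltn_ord i).
    by rewrite ltn_ord xi00 subrr.
  by rewrite /hq /mneg ltxx expr2 mulr0.
have Wt : Wf t <= 0.
  by move: Zle; rewrite {2}/Zf W00 mulr0 /Zf pmulr_rle0 // expR_gt0.
have h0 : hq (w 0%N t) <= Wf t.
  rewrite WE; exact: (@sum_single _ (fun i => hq (w i t)) p 0 p1 (fun i => hq_ge0 _)).
have hq0 : hq (w 0%N t) = 0.
  by apply/eqP; rewrite eq_le hq_ge0 andbT; exact: le_trans h0 Wt.
have := @hq_eq0 _ _ hq0; rewrite /w /u subr_ge0.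
have -> : (inord 0 : 'I_p.+1) = ord0 by apply: val_inj; rewrite /= inordK.
by [].
Qed.
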